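(* Let $A,B,C$ be a bipartite LR triple over $\mathbb F$ of diameter $d$. Then $d$ is even, and for $0\le i\le d$ each of $\alpha_i,\alpha'_i,\alpha''_i,\beta_i,\beta'_i,\beta''_i$ is zero if $i$ is odd and nonzero if $i$ is even.
   Context: Let $V$ be a vector space over a field $\mathbb F$ with $\dim V=d+1$. A decomposition of $V$ is a sequence $(V_i)_{i=0}^d$ of one-dimensional subspaces with $V=\bigoplus V_i$; $X$ lowers it if $XV_i=V_{i-1}$ ($1\le i\le d$), $XV_0=0$; raises it if $XV_i=V_{i+1}$ ($0\le i\le d-1$), $XV_d=0$. An ordered pair $X,Y$ is an LR pair if some decomposition (unique, the $(X,Y)$-decomposition) is lowered by $X$ and raised by $Y$. An LR triple is $A,B,C\in\mathrm{End}(V)$ with $A,B$; $B,C$; $C,A$ LR pairs. With $E_i,E'_i,E''_i$ the projections onto the $i$-th components of the $(A,B)$-, $(B,C)$-, $(C,A)$-decompositions, the LR triple is bipartite if $\mathrm{tr}(CE_i)=\mathrm{tr}(AE'_i)=\mathrm{tr}(BE''_i)=0$ for all $0\le i\le d$. An $(X,Y)$-basis is a basis $(v_i)$ with $v_i$ in the $i$-th component of the $(X,Y)$-decomposition and $Xv_i=v_{i-1}$ ($1\le i\le d$). An upper triangular Toeplitz matrix with parameters $(\gamma_i)_{i=0}^d$ has $(i,k)$-entry $\gamma_{k-i}$ for $i\le k$ and $0$ otherwise; two bases are compatible if the transition matrix between them is upper triangular Toeplitz with diagonal $1$. The transition matrix from a $(C,B)$-basis to a compatible $(C,A)$-basis (resp.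 from an $(A,C)$-basis to a compatible $(A,B)$-basis; from a $(B,A)$-basis to a compatible $(B,C)$-basis) exists and is independent of choices; its parameters are $(\alpha_i)$ (resp. $(\alpha'_i)$; $(\alpha''_i)$), and those of its inverse are $(\beta_i)$ (resp. $(\beta'_i)$; $(\beta''_i)$). *)

(* Defs.v *)
(* V = 'rV[F]_(d.+1) (dim V = d+1); an endomorphism X of V is
   a square matrix acting on row vectors: X v := v *m X.  Subspaces of V are
   represented by (row spaces of) square matrices, as in mxalgebra. *)
From HB Require Import structures.
From mathcomp Require Import all_boot all_order all_algebra.
Set Implicit Arguments. Unset Strict Implicit. Unset Printing Implicit Defensive.
Import GRing.Theory.
Local Open Scope ring_scope.

Section LR.
Variables (F : fieldType) (d : nat).
Local Notation n := d.+1.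

Definition is_decomposition (D : 'I_n -> 'M[F]_n) : Prop :=
  (forall i, \rank (D i) = 1%N) /\
  mxdirect (\sum_(i < n) D i) /\ (\sum_(i < n) D i == 1%:M)%MS.

Definition lowers (X : 'M[F]_n) (D : 'I_n -> 'M[F]_n) : Prop :=
  forall i : 'I_n,
    if i == ord0 then D i *m X = 0 else (D i *m X == D (inord i.-1))%MS.

Definition raises (X : 'M[F]_n) (D : 'I_n -> 'M[F]_n) : Prop :=
  forall i : 'I_n,
    if i == ord_max then D i *m X = 0 else (D i *m X == D (inord i.+1))%MS.

Definition XY_decomposition (X Y : 'M[F]_n) (D : 'I_n -> 'M[F]_n) : Prop :=
  is_decomposition D /\ lowers X D /\ raises Y D.

Definition LR_pair (X Y : 'M[F]_n) : Prop := exists D, XY_decomposition X Y D.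

Definition LR_triple (A B C : 'M[F]_n) : Prop :=
  LR_pair A B /\ LR_pair B C /\ LR_pair C A.

Definition comp_proj (D : 'I_n -> 'M[F]_n) (i : 'I_n) : 'M[F]_n :=
  proj_mx (D i) (\sum_(j < n | j != i) D j).

Definition bipartite (A B C : 'M[F]_n) : Prop :=
  LR_triple A B C /\
  forall D D' D'', XY_decomposition A B D -> XY_decomposition B C D' ->
    XY_decomposition C A D'' ->
    forall i : 'I_n,
      \tr (comp_proj D i *m C) = 0 /\ \tr (comp_proj D' i *m A) = 0 /\
      \tr (comp_proj D'' i *m B) = 0.

(* A basis (v_i) is encoded as the matrix U with row i U = v_i.
   (X,Y)-basis: v_i lies in the i-th component of the (X,Y)-decomposition and
   X v_i = v_{i-1} (1 <= i <= d). *)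
Definition XY_basis (X Y : 'M[F]_n) (U : 'M[F]_n) : Prop :=
  U \in unitmx /\
  exists D, XY_decomposition X Y D /\
    forall i : 'I_n, (row i U <= D i)%MS /\
      (i != ord0 -> row i U *m X = row (inord i.-1) U).

(* Transition matrix S from basis U to basis W: w_j = sum_i S_{ij} u_i,
   i.e. W = S^T *m U. *)
Definition trans_mx (U W : 'M[F]_n) : 'M[F]_n := (W *m invmx U)^T.

Definition toeplitz (g : nat -> F) : 'M[F]_n :=
  \matrix_(i < n, k < n) if (i <= k)%N then g (k - i)%N else 0.

Definition compatible (U W : 'M[F]_n) : Prop :=
  exists g : nat -> F, g 0%N = 1 /\ trans_mx U W = toeplitz g.

Definition param (T : 'M[F]_n) (i : 'I_n) : F := T ord0 i.

Definition parity_pattern (T : 'M[F]_n) : Prop :=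
  forall i : 'I_n, (odd i -> param T i = 0) /\ (~~ odd i -> param T i != 0).

End LR.

(* Main.v *)
Require Import Defs.
From HB Require Import structures.
From mathcomp Require Import all_boot all_order all_algebra.
From mathcomp Require Import zify.
Set Implicit Arguments. Unset Strict Implicit. Unset Printing Implicit Defensive.
Import GRing.Theory.
Local Open Scope ring_scope.

Section Aux.
Variables (F : fieldType) (d : nat).
Local Notation n := d.+1.

Definition supm (r : 'I_n -> F) : 'M[F]_n :=
  \matrix_(i, j) if (j == i.+1 :> nat) then r i else 0.
Definition subm (r : 'I_n -> F) : 'M[F]_n :=
  \matrix_(i, j) if (i == j.+1 :> nat) then r i else 0.

Lemma mul_supmE r (P : 'M[F]_n) i j :
  (supm r *m P) i j = if (i < d)%N then r i * P (inord i.+1) j else 0.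
Proof.
rewrite mxE; case: ifP => hi.
  rewrite (bigD1 (inord i.+1)) //= big1 ?addr0 ?mxE ?inordK ?eqxx //.
  move=> k hk; rewrite mxE; case: eqP => [hk'|]; last by rewrite mul0r.
  by case/eqP: hk; apply: val_inj; rewrite /= inordK // -hk'.
rewrite big1 // => k _; rewrite mxE; case: eqP => [hk'|]; last by rewrite mul0r.
by move: (ltn_ord k); rewrite hk' ltnS hi.
Qed.

Lemma mulE_supm r (P : 'M[F]_n) i j :
  (P *m supm r) i j = if (0 < j)%N then P i (inord j.-1) * r (inord j.-1) else 0.
Proof.
rewrite mxE; case: ifP => hj.
  have hj1 : (j.-1 < n)%N := leq_ltn_trans (leq_pred _) (ltn_ord _).
  rewrite (bigD1 (inord j.-1)) //= big1 ?addr0 ?mxE ?inordK ?prednK ?eqxx //; try exact: ltnW (ltn_ord _).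
  move=> k hk; rewrite mxE; case: eqP => [hk'|]; last by rewrite mulr0.
  by case/eqP: hk; apply: val_inj; rewrite /= hk' /= inordK.
rewrite big1 // => k _; rewrite mxE; case: eqP => [hk'|]; last by rewrite mulr0.
by move: hj; rewrite hk'.
Qed.

Lemma mul_submE r (P : 'M[F]_n) i j :
  (subm r *m P) i j = if (0 < i)%N then r i * P (inord i.-1) j else 0.
Proof.
rewrite mxE; case: ifP => hi.
  have hi1 : (i.-1 < n)%N := leq_ltn_trans (leq_pred _) (ltn_ord _).
  rewrite (bigD1 (inord i.-1)) //= big1 ?addr0 ?mxE ?inordK ?prednK ?eqxx //; try exact: ltnW (ltn_ord _).
  move=> k hk; rewrite mxE; case: eqP => [hk'|]; last by rewrite mul0r.
  by case/eqP: hk; apply: val_inj; rewrite /= hk' /= inordK.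
rewrite big1 // => k _; rewrite mxE; case: eqP => [hk'|]; last by rewrite mul0r.
by move: hi; rewrite hk'.
Qed.

Lemma mulE_subm r (P : 'M[F]_n) i j :
  (P *m subm r) i j = if (j < d)%N then P i (inord j.+1) * r (inord j.+1) else 0.
Proof.
rewrite mxE; case: ifP => hj.
  rewrite (bigD1 (inord j.+1)) //= big1 ?addr0 ?mxE ?inordK ?eqxx //.
  move=> k hk; rewrite mxE; case: eqP => [hk'|]; last by rewrite mulr0.
  by case/eqP: hk; apply: val_inj; rewrite /= inordK // -hk'.
rewrite big1 // => k _; rewrite mxE; case: eqP => [hk'|]; last by rewrite mulr0.
by move: (ltn_ord k); rewrite hk' ltnS hj.
Qed.


Definition shiftm : 'M[F]_n := supm (fun _ : 'I_n => (1 : F)).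

Lemma toeplitzE (g : nat -> F) (i j : 'I_n) :
  toeplitz d g i j = if (i <= j)%N then g (j - i)%N else 0.
Proof. by rewrite mxE. Qed.

Lemma toeplitz_comm (g : nat -> F) : toeplitz d g *m shiftm = shiftm *m toeplitz d g.
Proof.
apply/matrixP => i j; rewrite mulE_supm mul_supmE !toeplitzE.
have hj := ltn_ord j; have hi := ltn_ord i.
case: (posnP j) => [j0|jpos].
  by rewrite j0 /=; case: ifP => // hid; rewrite inordK // mulr0.
have hj1 : (j.-1 < n)%N := leq_ltn_trans (leq_pred _) hj.
case: (ltnP i d) => hid.
  by rewrite !inordK // mulr1 mul1r -[in RHS](prednK jpos) ltnS subSS.
rewrite inordK //; have hid' : i = d :> nat by apply/eqP; rewrite eqn_leq hid andbT -ltnS.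
rewrite ifF ?mul0r // hid'; apply/negbTE; rewrite -ltnNge.
by rewrite -ltnS prednK.
Qed.

Lemma comm_toeplitz (M : 'M[F]_n) :
  M *m shiftm = shiftm *m M -> M = toeplitz d (fun k => M ord0 (inord k)).
Proof.
move=> hM; apply/matrixP => i j; rewrite toeplitzE.
have E : forall i j : 'I_n, (i < d)%N ->
   M (inord i.+1) j = if (0 < j)%N then M i (inord j.-1) else 0.
  move=> i' j' hi'; move/matrixP: hM => /(_ i' j').
  by rewrite mulE_supm mul_supmE hi' mulr1 mul1r => <-.
case: i => i hi; elim: i hi j => [|i IH] hi j.
  rewrite leq0n subn0; congr (M _ _); first by apply: val_inj.
  by rewrite inord_val.
have hi' : (i < n)%N by apply: ltnW.
have -> : Ordinal hi = inord i.+1 by apply: val_inj; rewrite /= inordK.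
rewrite (E (Ordinal hi')) //; case: (posnP j) => [j0|jpos].
  by rewrite j0 inordK.
rewrite IH /= !inordK //; last exact: leq_ltn_trans (leq_pred _) (ltn_ord _).
by rewrite -[in RHS](prednK jpos) ltnS subSS.
Qed.

Lemma inv_toeplitz (g : nat -> F) : g 0%N = 1 -> toeplitz d g \in unitmx ->
  exists h, h 0%N = 1 /\ invmx (toeplitz d g) = toeplitz d h.
Proof.
move=> g0 hu; set T := toeplitz d g.
have hc : invmx T *m shiftm = shiftm *m invmx T.
  have e1 : shiftm = (shiftm *m T) *m invmx T by rewrite mulmxK.
  by rewrite {1}e1 -toeplitz_comm !mulmxA mulVmx // mul1mx.
move: (comm_toeplitz hc) => hT; exists (fun k => invmx T ord0 (inord k)).
split=> //; move/matrixP: (mulmxV hu) => /(_ ord0 ord0).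
rewrite mxE (bigD1 ord0) //= big1 ?addr0.
  rewrite {1}/T toeplitzE /= g0 mul1r mxE eqxx.
  have -> : inord 0 = ord0 :> 'I_n by apply: val_inj; rewrite /= inordK.
  by [].
move=> k hk; rewrite hT !toeplitzE [X in _ * X]ifF ?mulr0 //.
by rewrite leqn0; apply/negP => /eqP hk0; case/eqP: hk; apply: val_inj.
Qed.


Lemma row_unit_neq0 (U : 'M[F]_n) i : U \in unitmx -> row i U != 0.
Proof.
move=> hU; apply/eqP => h0.
have : (delta_mx 0 i : 'rV[F]_n) *m U *m invmx U = 0 by rewrite -rowE h0 mul0mx.
rewrite mulmxK // => /matrixP /(_ 0 i); rewrite !mxE !eqxx /=.
by move/eqP; rewrite oner_eq0.
Qed.

Lemma row_subm r (U : 'M[F]_n) i :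
  row i (subm r *m U) = if (0 < i)%N then r i *: row (inord i.-1) U else 0.
Proof.
apply/rowP => j; rewrite [LHS]mxE mul_submE; case: ifP => _; by rewrite !mxE.
Qed.

Lemma row_supm r (U : 'M[F]_n) i :
  row i (supm r *m U) = if (i < d)%N then r i *: row (inord i.+1) U else 0.
Proof.
apply/rowP => j; rewrite [LHS]mxE mul_supmE; case: ifP => _; by rewrite !mxE.
Qed.

Lemma dec_row_eq (D : 'I_n -> 'M[F]_n) (U : 'M[F]_n) i :
  is_decomposition D -> U \in unitmx -> (row i U <= D i)%MS ->
  (row i U == D i)%MS.
Proof.
move=> [hr _] hU hs; move: (mxrank_leqif_eq hs) => [_ <-].
by rewrite hr rank_rV row_unit_neq0.
Qed.

Lemma basis_lower (X Y : 'M[F]_n) D (U : 'M[F]_n) :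
  XY_decomposition X Y D -> U \in unitmx -> (forall i, (row i U <= D i)%MS) ->
  exists r, U *m X = subm r *m U /\ forall i : 'I_n, (0 < i)%N -> r i != 0.
Proof.
move=> [hD [hl _]] hU hs.
have eqD : forall i, (row i U :=: D i)%MS by move=> i; apply/eqmxP/dec_row_eq.
have : forall i : 'I_n, exists c : F,
    row i U *m X = (if (0 < i)%N then c *: row (inord i.-1) U else 0) /\
    ((0 < i)%N -> c != 0).
  move=> i; move: (hl i); case: eqP => [-> | hi0].
    move=> h0; exists 0; split=> //=; apply/eqP; rewrite -submx0 -h0.
    by rewrite submxMr // eqD.
  have ipos : (0 < i)%N by rewrite lt0n; apply/eqP => h; apply: hi0; apply: val_inj.
  move=> hX; have : (row i U *m X <= row (inord i.-1) U)%MS.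
    by rewrite (eqmxMr _ (eqD i)) (eqmxP hX) eqD.
  move/sub_rVP => [c hc]; exists c; rewrite ipos; split=> // _.
  apply/eqP => c0; move: hc; rewrite c0 scale0r => h.
  have h' : \rank (D i *m X) = 0%N by rewrite -(eqmxMr X (eqD i)) h mxrank0.
  by case: hD => /(_ (inord i.-1)); rewrite -(eqmx_rank hX) h'.
move/fin_all_exists => [r hr]; exists r; split; last by move=> i /(proj2 (hr i)).
by apply/row_matrixP => i; rewrite row_mul row_subm (proj1 (hr i)).
Qed.

Lemma basis_raise (X Y : 'M[F]_n) D (U : 'M[F]_n) :
  XY_decomposition X Y D -> U \in unitmx -> (forall i, (row i U <= D i)%MS) ->
  exists r, U *m Y = supm r *m U /\ forall i : 'I_n, (i < d)%N -> r i != 0.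
Proof.
move=> [hD [_ hl]] hU hs.
have eqD : forall i, (row i U :=: D i)%MS by move=> i; apply/eqmxP/dec_row_eq.
have : forall i : 'I_n, exists c : F,
    row i U *m Y = (if (i < d)%N then c *: row (inord i.+1) U else 0) /\
    ((i < d)%N -> c != 0).
  move=> i; move: (hl i); case: eqP => [-> | hi0].
    move=> h0; exists 0; rewrite ltnn; split=> //=; apply/eqP; rewrite -submx0 -h0.
    by rewrite submxMr // eqD.
  have ipos : (i < d)%N.
    by rewrite ltn_neqAle -ltnS ltn_ord andbT; apply/eqP => h; apply: hi0; apply: val_inj.
  move=> hX; have : (row i U *m Y <= row (inord i.+1) U)%MS.
    by rewrite (eqmxMr _ (eqD i)) (eqmxP hX) eqD.
  move/sub_rVP => [c hc]; exists c; rewrite ipos; split=> // _.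
  apply/eqP => c0; move: hc; rewrite c0 scale0r => h.
  have h' : \rank (D i *m Y) = 0%N by rewrite -(eqmxMr Y (eqD i)) h mxrank0.
  by case: hD => /(_ (inord i.+1)); rewrite -(eqmx_rank hX) h'.
move/fin_all_exists => [r hr]; exists r; split; last by move=> i /(proj2 (hr i)).
by apply/row_matrixP => i; rewrite row_mul row_supm (proj1 (hr i)).
Qed.


Lemma dec_basis X Y (D : 'I_n -> 'M[F]_n) :
  XY_decomposition X Y D ->
  exists V : 'M[F]_n, V \in unitmx /\ forall i, (row i V <= D i)%MS.
Proof.
move=> [[hr [_ hs]] _].
have : forall i, exists v : 'rV[F]_n, (v <= D i)%MS /\ v != 0.
  move=> i; case: (pickP (fun j => row j (D i) != 0)) => [j hj|h0].
    by exists (row j (D i)); rewrite row_sub.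
  have : D i = 0 by apply/row_matrixP => j; move/negbFE/eqP: (h0 j) ->; rewrite row0.
  by move=> e; move: (hr i); rewrite e mxrank0.
move/fin_all_exists => [v hv]; exists (\matrix_i v i); split; last first.
  by move=> i; rewrite rowK; case: (hv i).
rewrite -row_full_unit -sub1mx; case/andP: hs => _ hs; apply: submx_trans hs _.
apply/sumsmx_subP => i _; have [hvi vn0] := hv i.
move: (mxrank_leqif_eq hvi) => [_ ]; rewrite hr rank_rV vn0 eqxx => /esym /andP [_ h].
by apply: submx_trans h _; rewrite -(rowK v i) row_sub.
Qed.


Lemma trace_delta (M : 'M[F]_n) k : \tr (delta_mx k k *m M) = M k k.
Proof.
rewrite -(mul_delta_mx (0 : 'I_1)) -mulmxA mxtrace_mulC -mulmxA.
by rewrite -colE -rowE trace_mx11 !mxE.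
Qed.

Lemma comp_proj_basis (D : 'I_n -> 'M[F]_n) (U : 'M[F]_n) k :
  is_decomposition D -> U \in unitmx -> (forall i, (row i U <= D i)%MS) ->
  (forall j, j != k -> (row j U <= (\sum_(i < n | i != k) D i)%R)%MS) ->
  comp_proj D k = invmx U *m delta_mx k k *m U.
Proof.
move=> [_ [hdir _]] hU hs hsum.
have cap0 : (D k :&: (\sum_(j < n | j != k) D j) = 0)%MS.
  by move/mxdirect_sumsP: hdir => /(_ k isT).
have cap : (D k :&: (\sum_(j < n | j != k) D j)%R = 0)%MS.
  apply/eqP; rewrite -submx0 -[X in (_ <= X)%MS]cap0 capmxS //.
  by apply: summx_sub_sums.
rewrite -mulmxA; apply: (canRL (mulKmx hU)).
apply/row_matrixP => j; rewrite row_mul [RHS]rowE [RHS]mulmxA mul_delta_mx_cond.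
rewrite /comp_proj; case: eqP => [->|/eqP hjk].
  by rewrite mulr1n -rowE proj_mx_id ?hs.
by rewrite /= mulr0n mul0mx proj_mx_0 //; apply: hsum.
Qed.

Lemma trace_proj (D : 'I_n -> 'M[F]_n) (U A : 'M[F]_n) k :
  is_decomposition D -> U \in unitmx -> (forall i, (row i U <= D i)%MS) ->
  (forall j, j != k -> (row j U <= (\sum_(i < n | i != k) D i)%R)%MS) ->
  \tr (comp_proj D k *m A) = (U *m A *m invmx U) k k.
Proof.
move=> hD hU hs hsum; rewrite (comp_proj_basis hD hU hs hsum) -!mulmxA mxtrace_mulC.
by rewrite -!mulmxA trace_delta.
Qed.


Lemma dkk (M : 'M[F]_n) (k : 'I_n) : delta_mx k k *m M = delta_mx k (0 : 'I_1) *m row k M.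
Proof. by rewrite rowE mulmxA mul_delta_mx. Qed.

Lemma dfull (k : 'I_n) (v : 'rV[F]_n) : (delta_mx k (0 : 'I_1) *m v :=: v)%MS.
Proof. by apply: eqmxMfull; rewrite /row_full mxrank_delta. Qed.

Lemma dkk_eq (U : 'M[F]_n) (k : 'I_n) : (delta_mx k k *m U :=: row k U)%MS.
Proof. by rewrite dkk; apply: dfull. Qed.

Lemma basis_dec X Y (U : 'M[F]_n) r s :
  U \in unitmx -> U *m X = subm r *m U -> (forall i : 'I_n, (0 < i)%N -> r i != 0) ->
  U *m Y = supm s *m U -> (forall i : 'I_n, (i < d)%N -> s i != 0) ->
  XY_decomposition X Y (fun i => delta_mx i i *m U).
Proof.
move=> hU hX hr hY hs.
have rk : forall i, \rank (delta_mx i i *m U) = 1%N.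
  by move=> i; rewrite (dkk_eq U i) rank_rV row_unit_neq0.
have hUs : (U <= \sum_(i < n) delta_mx i i *m U)%MS.
  by apply/row_subP => i; rewrite (sumsmx_sup i) // (dkk_eq U i).
split; [split; [exact: rk | split] | split].
- rewrite mxdirectEgeq /=; under eq_bigr do rewrite rk.
  rewrite sum1_card card_ord; apply: leq_trans (mxrankS hUs).
  by rewrite mxrank_unit.
- rewrite submx1 /=; apply: submx_trans hUs.
  by rewrite sub1mx row_full_unit.
- move=> i; rewrite -mulmxA hX dkk row_subm.
  case: eqP => [->|hi0]; first by rewrite /= mulmx0.
  have ipos : (0 < i)%N by rewrite lt0n; apply/eqP => h; apply: hi0; apply: val_inj.
  rewrite ipos; apply/eqmxP; apply: eqmx_trans (dfull _ _) _.
  apply: eqmx_trans (eqmx_scale _ (hr i ipos)) _.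
  by apply: eqmx_sym; apply: dkk_eq.
- move=> i; rewrite -mulmxA hY dkk row_supm.
  case: eqP => [->|hi0]; first by rewrite /= ltnn mulmx0.
  have ipos : (i < d)%N.
    by rewrite ltn_neqAle -ltnS ltn_ord andbT; apply/eqP => h; apply: hi0; apply: val_inj.
  rewrite ipos; apply/eqmxP; apply: eqmx_trans (dfull _ _) _.
  apply: eqmx_trans (eqmx_scale _ (hs i ipos)) _.
  by apply: eqmx_sym; apply: dkk_eq.
Qed.

Lemma basis_ringsum (U : 'M[F]_n) k j : j != k ->
  (row j U <= (\sum_(i < n | i != k) delta_mx i i *m U)%R)%MS.
Proof.
move=> hjk; suff -> : row j U = row j (\sum_(i < n | i != k) delta_mx i i *m U).
  exact: row_sub.
rewrite [RHS]rowE mulmx_sumr (bigD1 j) //= big1 ?addr0.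
  by rewrite mulmxA mul_delta_mx -rowE.
by move=> i /andP [_ hij]; rewrite mulmxA mul_delta_mx_cond eq_sym (negbTE hij) mulr0n mul0mx.
Qed.

Lemma comp_proj_rev (D : 'I_n -> 'M[F]_n) i :
  comp_proj (fun j => D (rev_ord j)) i = comp_proj D (rev_ord i).
Proof.
rewrite /comp_proj; congr proj_mx; rewrite [RHS](reindex_inj rev_ord_inj) /=.
by apply: eq_bigl => j; rewrite (inj_eq rev_ord_inj).
Qed.

Lemma rev_ord0 : (rev_ord (ord0 : 'I_n) = ord_max).
Proof. by apply: val_inj; rewrite /= subn1. Qed.

Lemma rev_eq0 (i : 'I_n) : (rev_ord i == ord_max) = (i == ord0).
Proof. by rewrite -rev_ord0 (inj_eq rev_ord_inj). Qed.

Lemma rev_eqmax (i : 'I_n) : (rev_ord i == ord0) = (i == ord_max).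
Proof. by rewrite -{1}(rev_ordK ord0) rev_ord0 (inj_eq rev_ord_inj). Qed.

Lemma rev_dec X Y (D : 'I_n -> 'M[F]_n) :
  XY_decomposition X Y D -> XY_decomposition Y X (fun i => D (rev_ord i)).
Proof.
move=> [[hr [hdir hs]] [hl hra]].
have eS : (\sum_(i < n) D (rev_ord i))%MS = (\sum_(i < n) D i)%MS.
  by rewrite [RHS](reindex_inj rev_ord_inj).
split; [split; [by move=> i; apply: hr | split] | split].
- move: hdir; rewrite !mxdirectE /= eS => /eqP ->; apply/eqP.
  by rewrite [LHS](reindex_inj rev_ord_inj).
- by move: hs; rewrite (reindex_inj rev_ord_inj).
- move=> i; move: (hra (rev_ord i)); rewrite rev_eq0; case: eqP => // hi0.
  have ipos : (0 < i)%N by rewrite lt0n; apply/eqP => h; apply: hi0; apply: val_inj.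
  suff -> : rev_ord (inord i.-1) = inord (rev_ord i).+1 :> 'I_n by [].
  apply: val_inj; rewrite /= !inordK; move: (ltn_ord i) ipos; case: (nat_of_ord i) => [//|k] /= hk _; lia.
- move=> i; move: (hl (rev_ord i)); rewrite rev_eqmax; case: eqP => // hi0.
  have ipos : (i < d)%N.
    by rewrite ltn_neqAle -ltnS ltn_ord andbT; apply/eqP => h; apply: hi0; apply: val_inj.
  suff -> : rev_ord (inord i.+1) = inord (rev_ord i).-1 :> 'I_n by [].
  apply: val_inj; rewrite /= !inordK /=; try lia.
Qed.

End Aux.

Section Core.
Variables (F : fieldType) (d : nat).
Local Notation n := d.+1.

Lemma sum_one (G : 'I_n -> F) (p : 'I_n) :
  (forall i, i != p -> G i = 0) -> \sum_i G i = G p.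
Proof. by move=> h; rewrite (bigD1 p) //= big1 ?addr0. Qed.

Lemma sum_two (G : 'I_n -> F) (p q : 'I_n) : p != q ->
  (forall i, i != p -> i != q -> G i = 0) -> \sum_i G i = G p + G q.
Proof.
move=> hpq h; rewrite (bigD1 p) //= (bigD1 q) 1?eq_sym //= big1 ?addr0 //.
by move=> i /andP [hip hiq]; apply: h.
Qed.

Lemma tri_supm (P : 'M[F]_n) (b f : 'I_n -> F) :
  (forall i : 'I_n, (i < d)%N -> f i != 0) ->
  P *m supm f = supm b *m P -> forall i j : 'I_n, (j < i)%N -> P i j = 0.
Proof.
move=> hf hP.
have key : forall i j : 'I_n, (j < i)%N ->
    P i j * f j = if (i < d)%N then b i * P (inord i.+1) (inord j.+1) else 0.
  move=> i j hji; have hjd : (j < d)%N by apply: leq_trans hji _; rewrite -ltnS.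
  move/matrixP: hP => /(_ i (inord j.+1)); rewrite mulE_supm mul_supmE !inordK //=.
  by have -> : inord j = j by rewrite inord_val.
suff : forall t (i j : 'I_n), (j < i)%N -> (d - i <= t)%N -> P i j = 0.
  by move=> h i j hji; apply: (h (d - i)%N).
elim=> [|t IH] i j hji hdt.
  move: (key i j hji); rewrite ifF; last by apply/negbTE; rewrite -leqNgt -subn_eq0 -leqn0.
  move/eqP; rewrite mulf_eq0 (negbTE (hf j _)) ?orbF; first by move/eqP.
  by apply: leq_trans hji _; rewrite -ltnS.
move: (key i j hji); case: ifP => hid; last first.
  move/eqP; rewrite mulf_eq0 (negbTE (hf j _)) ?orbF; first by move/eqP.
  by apply: leq_trans hji _; rewrite -ltnS.
rewrite (IH (inord i.+1) (inord j.+1)) ?mulr0 ?inordK //; last by lia.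
  move/eqP; rewrite mulf_eq0 (negbTE (hf j _)) ?orbF; first by move/eqP.
  exact: ltn_trans hji hid.
exact: ltn_trans hji hid.
Qed.


Lemma eq_inord (i : 'I_n) m : (m <= d)%N -> (i == inord m :> 'I_n) = ((i : nat) == m).
Proof. by move=> hm; rewrite -val_eqE /= inordK. Qed.

Lemma core (A B U W V : 'M[F]_n) (a b f l : 'I_n -> F) (g : nat -> F) :
  U \in unitmx -> W \in unitmx -> V \in unitmx ->
  U *m B = supm b *m U -> (forall i : 'I_n, (i < d)%N -> b i != 0) ->
  W *m A = supm a *m W -> (forall i : 'I_n, (i < d)%N -> a i != 0) ->
  V *m A = subm l *m V -> (forall i : 'I_n, (0 < i)%N -> l i != 0) ->
  V *m B = supm f *m V -> (forall i : 'I_n, (i < d)%N -> f i != 0) ->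
  W = (toeplitz d g)^T *m U -> g 0%N = 1 ->
  (forall k, (U *m A *m invmx U) k k = 0) ->
  ~~ odd d /\
  (forall k, (k <= d)%N -> (odd k -> g k = 0) /\ (~~ odd k -> g k != 0)).
Proof.
move=> hU hW hV hUB hb hWA ha hVA hl hVB hf hT g0 hdiag.
set M := U *m A *m invmx U.
have hdiagM : forall k, M k k = 0 := hdiag.
have hMU : U *m A = M *m U by rewrite /M mulmxKV.
set L := (toeplitz d g)^T.
have LE : forall i k : 'I_n, L i k = if (k <= i)%N then g (i - k)%N else 0.
  by move=> i k; rewrite !mxE.
have hLM : L *m M = supm a *m L.
  apply: (can_inj (mulmxK hU)).
  by rewrite -mulmxA -hMU mulmxA -hT hWA hT mulmxA.
have LMe : forall i j : 'I_n, (forall k : 'I_n, (k < i)%N -> M k j = 0) ->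
    (L *m M) i j = M i j.
  move=> i j h; rewrite mxE (bigD1 i) //= LE leqnn subnn g0 mul1r big1 ?addr0 //.
  move=> k hk; rewrite LE; case: ifP => hki; last by rewrite mul0r.
  by rewrite h ?mulr0 // ltn_neqAle hk hki.
have F1 : forall i j : 'I_n, (i.+1 < j)%N -> M i j = 0.
  suff : forall m (i j : 'I_n), i = m :> nat -> (i.+1 < j)%N -> M i j = 0.
    by move=> h i j; exact: h.
  elim/ltn_ind => m IH i j him hij.
  have e1 : (L *m M) i j = M i j.
    apply: LMe => k hk; rewrite him in hk; apply: (IH k hk k j erefl); lia.
  move: e1; rewrite hLM mul_supmE => <-; case: ifP => hid //.
  by rewrite LE inordK // ifF ?mulr0 //; apply/negbTE; rewrite -ltnNge.
have F1b : forall i : 'I_n, (i < d)%N -> M i (inord i.+1) = a i.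
  move=> i hid; have e1 : (L *m M) i (inord i.+1) = M i (inord i.+1).
    by apply: LMe => k hk; apply: F1; rewrite inordK.
  by move: e1; rewrite hLM mul_supmE hid LE leqnn subnn g0 mulr1 => <-.
set P := U *m invmx V; set Q := V *m invmx U.
have hPV : U = P *m V by rewrite /P mulmxKV.
have hQU : V = Q *m U by rewrite /Q mulmxKV.
have hPf : P *m supm f = supm b *m P.
  apply: (can_inj (mulmxK hV)).
  by rewrite -mulmxA -hVB mulmxA -hPV hUB {1}hPV mulmxA.
have hQb : Q *m supm b = supm f *m Q.
  apply: (can_inj (mulmxK hU)).
  by rewrite -mulmxA -hUB mulmxA -hQU hVB {1}hQU mulmxA.
have Pt := tri_supm hf hPf.
have Qt := tri_supm hb hQb.
have hPQ : P *m Q = 1%:M by rewrite /P /Q mulmxA mulmxKV // mulmxV.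
clearbody P Q.
have Pd : forall i, P i i * Q i i = 1.
  move=> i; move/matrixP: hPQ => /(_ i i); rewrite !mxE eqxx /=.
  rewrite (bigD1 i) //= big1 ?addr0 //.
  move=> k hk.
  case: (ltngtP k i) => hki.
  - by rewrite Pt ?mul0r.
  - by rewrite Qt ?mulr0.
  - by case/eqP: hk; apply: val_inj.
have hM : M = P *m subm l *m Q.
  apply: (can_inj (mulmxK hU)).
  by rewrite -hMU -!mulmxA -hQU -hVA mulmxA -hPV.
have F2 : forall i j : 'I_n, (j.+1 < i)%N -> M i j = 0.
  move=> i j hji; rewrite hM mxE big1 // => k _; rewrite mulE_subm.
  case: ifP => hkd; last by rewrite mul0r.
  case: (ltnP j k) => hjk; first by rewrite Qt ?mulr0.
  by rewrite Pt ?mul0r ?mul0r // inordK //; apply: (leq_ltn_trans _ hji); rewrite ltnS.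
have F2b : forall i : nat, (i < d)%N -> M (inord i.+1) (inord i) != 0.
  move=> i hid; have hi1 : (i < n)%N by lia.
  have hi2 : (i.+1 < n)%N by lia.
  have -> : M (inord i.+1) (inord i) =
      P (inord i.+1) (inord i.+1) * l (inord i.+1) * Q (inord i) (inord i).
    rewrite hM mxE (bigD1 (inord i)) //= big1 ?addr0.
      by rewrite mulE_subm inordK // hid.
    move=> k hk; rewrite mulE_subm; case: ifP => hkd; last by rewrite mul0r.
    case: (ltnP i k) => hjk; first by rewrite Qt ?mulr0 // inordK.
    rewrite Pt ?mul0r // !inordK //.
    have hk' : (k : nat) != i.
      by apply/eqP => e; case/eqP: hk; apply: val_inj; rewrite /= inordK.
    by rewrite ltnS ltn_neqAle hk' hjk.
  rewrite !mulf_neq0 ?hl ?inordK //.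
  - by apply/eqP => h; move: (Pd (inord i.+1)); rewrite h mul0r => /eqP; rewrite eq_sym oner_eq0.
  - apply/eqP => h; move: (Pd (inord i)); rewrite h mulr0 => /eqP.
    by rewrite eq_sym oner_eq0.
have F1n : forall i : nat, (i < d)%N -> M (inord i) (inord i.+1) != 0.
  move=> i hid; have hi : (i < n)%N by lia.
  have := F1b (inord i); rewrite inordK // => /(_ hid) ->.
  by apply: ha; rewrite inordK.
have hker : row ord_max L *m M = 0.
  apply: (can_inj (mulmxK hU)); rewrite mul0mx -mulmxA -hMU mulmxA -row_mul -hT.
  by rewrite -row_mul hWA row_supm /= ltnn.
clearbody M L.
have col : forall j : 'I_n, \sum_(i < n) g (d - i)%N * M i j = 0.
  move=> j; move/matrixP: hker => /(_ 0 j); rewrite !mxE => h.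
  apply: etrans h; apply: eq_bigr => i _; rewrite mxE LE; congr (_ * _).
  by rewrite -ltnS ltn_ord.
have Mj0 : forall (i : 'I_n) m, (m <= d)%N -> (i : nat) = m -> M i (inord m) = 0.
  move=> i m hm him; have -> : inord m = i by apply: val_inj; rewrite /= inordK.
  exact: hdiagM.
have par : forall k, (k <= d)%N -> (odd k -> g k = 0) /\ (~~ odd k -> g k != 0).
  elim/ltn_ind => k IH hkd.
  case: k IH hkd => [|[|k]] IH hkd.
  - by split=> //= _; rewrite g0 oner_eq0.
  - have hd1 : (d - 1 < d)%N by lia.
    have := col (inord d); rewrite (sum_one (p := inord (d - 1))).
      rewrite inordK; last by lia.
      have -> : (d - (d - 1) = 1)%N by lia.
      move/eqP; rewrite mulf_eq0 => /orP [/eqP h|h]; first by split.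
      move: (F1n _ hd1); have -> : (d - 1).+1 = d by lia.
      by rewrite (eqP h) eqxx.
    move=> i; rewrite eq_inord; last by lia.
    move=> hi; have hid := ltn_ord i.
    case: (ltngtP i (d - 1)) => h.
    + by rewrite F1 ?mulr0 // inordK //; lia.
    + by rewrite Mj0 ?mulr0 //; lia.
    + by move: hi; rewrite h eqxx.
  - set m := (d - k.+2)%N.
    have hm : (m.+2 <= d)%N by rewrite /m; lia.
    have := col (inord m.+1); rewrite (sum_two (p := inord m) (q := inord m.+2)).
    + rewrite !inordK; try lia.
      have -> : (d - m = k.+2)%N by rewrite /m; lia.
      have -> : (d - m.+2 = k)%N by rewrite /m; lia.
      have hk : (k < k.+2)%N by [].
      have hkd' : (k <= d)%N by lia.
      move: (IH k hk hkd') => [IHo IHe].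
      have hA := F1n m (ltac:(lia)).
      have hB := F2b m.+1 (ltac:(lia)).
      rewrite /= !negbK => hsum; split=> hodd.
      * move: hsum; rewrite (IHo hodd) mul0r addr0 => /eqP.
        by rewrite mulf_eq0 (negbTE hA) orbF => /eqP.
      * apply/eqP => h0; move: hsum; rewrite h0 mul0r add0r => /eqP.
        by rewrite mulf_eq0 (negbTE hB) orbF (negbTE (IHe hodd)).
    + by rewrite eq_inord ?inordK //; lia.
    + move=> i; rewrite !eq_inord; try lia.
      move=> hi1 hi2; have hid := ltn_ord i.
      case: (ltngtP i m.+1) => h.
      * by rewrite F1 ?mulr0 // inordK //; lia.
      * by rewrite F2 ?mulr0 // inordK //; lia.
      * by rewrite Mj0 ?mulr0 //; lia.
split; last exact: par.
case: (posnP d) => [-> //|dpos].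
have := col (inord 0); rewrite (sum_one (p := inord 1)).
  rewrite inordK //; move/eqP; rewrite mulf_eq0 (negbTE (F2b 0 dpos)) orbF => /eqP h.
  have := par (d - 1)%N (leq_subr _ _); case: (boolP (odd (d - 1))) => ho.
    move=> _; move: ho; rewrite -{2}(subnK dpos) addn1 /=.
    by case: (odd (d - 1)).
  by case => _ /(_ isT); rewrite h eqxx.
move=> i; rewrite eq_inord //; move=> hi; have hid := ltn_ord i.
case: (posnP i) => h.
  by rewrite Mj0 ?mulr0.
by rewrite F2 ?mulr0 // inordK //; lia.
Qed.


Lemma inv_right (X Y : 'M[F]_n) : X \in unitmx -> X *m Y = 1%:M -> invmx X = Y.
Proof. by move=> hX hXY; rewrite -[invmx X]mulmx1 -hXY mulmxA mulVmx // mul1mx. Qed.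

Lemma clause (A B C : 'M[F]_n) : bipartite A B C ->
  forall U W, XY_basis C B U -> XY_basis C A W -> compatible U W ->
  ~~ odd d /\ parity_pattern (trans_mx U W).
Proof.
move=> [[[D hD] [[D' hD'] [D'' hD'']]] htr] U W [hU [DU [hDU hrU]]] [hW [DW [hDW hrW]]] [g [g0 hg]].
have hsU : forall i, (row i U <= DU i)%MS by move=> i; case: (hrU i).
have hsW : forall i, (row i W <= DW i)%MS by move=> i; case: (hrW i).
have [b [hUB hb]] := basis_raise hDU hU hsU.
have [r [hUC hr]] := basis_lower hDU hU hsU.
have [a [hWA ha]] := basis_raise hDW hW hsW.
have [V [hV hsV]] := dec_basis hD.
have [l [hVA hl]] := basis_lower hD hV hsV.
have [f [hVB hf]] := basis_raise hD hV hsV.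
have hT : W = (toeplitz d g)^T *m U.
  by rewrite -hg /trans_mx trmxK mulmxKV.
have hDF := basis_dec hU hUC hr hUB hb.
have hDR := rev_dec hDF.
have hdiag : forall k, (U *m A *m invmx U) k k = 0.
  move=> k; have [_ [h _]] := htr D _ DW hD hDR hDW (rev_ord k).
  rewrite (comp_proj_rev (fun i => delta_mx i i *m U)) rev_ordK in h.
  rewrite -h (trace_proj A (proj1 hDF) hU) //.
    by move=> i; rewrite (dkk_eq U i).
  by move=> j hjk; apply: basis_ringsum.
have [hd hpar] := core hU hW hV hUB hb hWA ha hVA hl hVB hf hT g0 hdiag.
split=> // i; rewrite /param hg toeplitzE /= subn0.
by apply: hpar; rewrite -ltnS.
Qed.

Lemma bip_rot (A B C : 'M[F]_n) : bipartite A B C -> bipartite B C A.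
Proof.
move=> [[pAB [pBC pCA]] htr]; split; first by split; [|split].
move=> D1 D2 D3 h1 h2 h3 i; have [t1 [t2 t3]] := htr D3 D1 D2 h3 h1 h2 i.
by split; [|split].
Qed.

Lemma bip_rev (A B C : 'M[F]_n) : bipartite A B C -> bipartite B A C.
Proof.
move=> [[[D hD] [[D' hD'] [D'' hD'']]] htr]; split.
  split; first by exists (fun i => D (rev_ord i)); apply: rev_dec.
  split; first by exists (fun i => D'' (rev_ord i)); apply: rev_dec.
  by exists (fun i => D' (rev_ord i)); apply: rev_dec.
move=> D1 D2 D3 h1 h2 h3 i.
have [t1 [t2 t3]] := htr _ _ _ (rev_dec h1) (rev_dec h3) (rev_dec h2) (rev_ord i).
by rewrite !comp_proj_rev !rev_ordK in t1 t2 t3; split; [|split].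
Qed.

Lemma rowZ' (a : F) (M : 'M[F]_n) i : row i (a *: M) = a *: row i M.
Proof. by apply/rowP => j; rewrite !mxE. Qed.

Lemma normalize X Y (D : 'I_n -> 'M[F]_n) : XY_decomposition X Y D -> exists U, XY_basis X Y U.
Proof.
move=> hD; have [V [hV hsV]] := dec_basis hD.
have [r [hVX hr]] := basis_lower hD hV hsV.
pose c := fix c (k : nat) : F := if k is k'.+1 then c k' / r (inord k'.+1) else 1.
have cn0 : forall k, (k <= d)%N -> c k != 0.
  elim=> [|k IH] hk /=; first by rewrite oner_eq0.
  rewrite mulf_neq0 ?invr_eq0 ?IH ?hr ?inordK //; exact: ltnW.
pose U : 'M[F]_n := \matrix_(i < n) (c i *: row i V).
have rU : forall i, row i U = c i *: row i V by move=> i; rewrite rowK.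
exists U; split.
  rewrite -row_full_unit -sub1mx; apply: submx_trans (_ : V <= U)%MS.
    by rewrite sub1mx row_full_unit.
  apply/row_subP => i; have hci : c i != 0 by apply: cn0; rewrite -ltnS.
  have -> : row i V = (c i)^-1 *: row i U by rewrite rU scalerA mulVf ?scale1r.
  by rewrite scalemx_sub ?row_sub.
exists D; split=> // i; split; first by rewrite rU scalemx_sub.
move=> hi0; have ipos : (0 < i)%N.
  by rewrite lt0n; apply/eqP => h; case/eqP: hi0; apply: val_inj.
rewrite rU -scalemxAl -row_mul hVX row_subm ipos scalerA rU.
have hi1 : (i.-1 < n)%N := leq_ltn_trans (leq_pred _) (ltn_ord _).
rewrite inordK //; congr (_ *: _).
case: i hi0 ipos hi1 => [[//|k] hk] _ _ hk' /=.
have -> : inord k.+1 = Ordinal hk by apply: val_inj; rewrite /= inordK.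
by rewrite mulfVK // hr.
Qed.

Lemma shift_rel X Y (U : 'M[F]_n) : XY_basis X Y U ->
  U *m X = subm (fun _ => 1) *m U.
Proof.
move=> [hU [D [hD hr]]]; apply/row_matrixP => i; rewrite row_mul row_subm.
case: (posnP i) => [i0|ipos].
  have e : i = ord0 by apply: val_inj.
  move: (proj1 (proj2 hD) ord0) (proj1 (hr ord0)); rewrite eqxx e /= => h0 hs.
  by apply/eqP; rewrite -submx0 -h0 submxMr.
rewrite /= scale1r; apply: (proj2 (hr i)).
by apply/eqP => e; move: ipos; rewrite e.
Qed.


Lemma toeplitz_unit0 (g : nat -> F) : toeplitz d g \in unitmx -> g 0%N != 0.
Proof.
move=> hu; apply/eqP => g0; move/matrixP: (mulVmx hu) => /(_ ord0 ord0).
rewrite !mxE eqxx /= big1 => [/eqP|k _]; first by rewrite eq_sym oner_eq0.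
rewrite toeplitzE; case: ifP; last by rewrite mulr0.
by rewrite leqn0 => /eqP ->; rewrite g0 mulr0.
Qed.

Lemma compat_exists (C B A U W0 : 'M[F]_n) : XY_basis C B U -> XY_basis C A W0 ->
  exists W, XY_basis C A W /\ compatible U W.
Proof.
move=> hbU hbW; have hUsh := shift_rel hbU; have hWsh := shift_rel hbW.
case: hbU => hU _; case: hbW => hW0 [D [hD hr]].
set S := subm (fun _ : 'I_n => (1 : F)).
set T0 := W0 *m invmx U.
have hTS : T0 *m S = S *m T0.
  apply: (can_inj (mulmxK hU)).
  by rewrite -mulmxA -hUsh mulmxA /T0 mulmxKV // hWsh -mulmxA mulmxKV.
have hST : S^T = shiftm F d.
  by apply/matrixP => i j; rewrite !mxE.
have hT' : T0^T *m shiftm F d = shiftm F d *m T0^T.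
  by rewrite -hST -!trmx_mul hTS.
have Te := comm_toeplitz hT'; set g' := (fun k => T0^T ord0 (inord k)) in Te.
have hTu : T0 \in unitmx by rewrite unitmx_mul hW0 unitmx_inv.
have hT0def : W0 *m invmx U = T0 by [].
clearbody T0.
have g'0 : g' 0%N != 0 by apply: toeplitz_unit0; rewrite -Te unitmx_tr.
set c := (g' 0%N)^-1.
have cn0 : c != 0 by rewrite invr_eq0.
exists (c *: W0); split.
  split; first by rewrite unitmxZ ?unitfE.
  exists D; split=> // i; rewrite rowZ'; split; first by rewrite scalemx_sub; case: (hr i).
  by move=> hi; rewrite -scalemxAl (proj2 (hr i) hi) rowZ'.
exists (fun k => c * g' k); split; first by rewrite mulVf.
rewrite /trans_mx -scalemxAl hT0def.
apply/matrixP => i j; rewrite !mxE.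
have -> : T0 j i = T0^T i j by rewrite mxE.
rewrite Te toeplitzE.
by case: ifP; rewrite ?mulr0.
Qed.

Lemma trans_inv (U W : 'M[F]_n) : U \in unitmx -> W \in unitmx ->
  trans_mx W U = invmx (trans_mx U W).
Proof.
move=> hU hW; rewrite /trans_mx -trmx_inv; congr trmx; apply/esym/inv_right.
  by rewrite unitmx_mul hW unitmx_inv.
by rewrite mulmxA mulmxKV // mulmxV.
Qed.

Lemma clause_full (A B C : 'M[F]_n) : bipartite A B C ->
  ~~ odd d /\
  (forall U W, XY_basis C B U -> XY_basis C A W -> compatible U W ->
     parity_pattern (trans_mx U W) /\ parity_pattern (invmx (trans_mx U W))).
Proof.
move=> hbip; split.
  have [[_ [[D' hD'] [D'' hD'']]] _] := hbip.
  have [U hbU] := normalize (rev_dec hD').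
  have [W0 hbW0] := normalize hD''.
  have [W [hbW hc]] := compat_exists hbU hbW0.
  exact: (clause hbip hbU hbW hc).1.
move=> U W hbU hbW hc; split; first exact: (clause hbip hbU hbW hc).2.
have hU := hbU.1; have hW := hbW.1.
rewrite -trans_inv //.
suff hc' : compatible W U by exact: (clause (bip_rev hbip) hbW hbU hc').2.
case: hc => g [g0 hg].
have hu : toeplitz d g \in unitmx.
  by rewrite -hg /trans_mx unitmx_tr unitmx_mul hW unitmx_inv.
have [h [h0 hh]] := inv_toeplitz g0 hu.
by exists h; split=> //; rewrite trans_inv // hg.
Qed.

End Core.

Unset Implicit Arguments.

Theorem lemma16p6 (F : fieldType) (d : nat) (A B C : 'M[F]_d.+1) :
  bipartite A B C ->
  ~~ odd d /\
  (forall U W, XY_basis C B U -> XY_basis C A W -> compatible U W ->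
     parity_pattern (trans_mx U W) /\ parity_pattern (invmx (trans_mx U W))) /\
  (forall U W, XY_basis A C U -> XY_basis A B W -> compatible U W ->
     parity_pattern (trans_mx U W) /\ parity_pattern (invmx (trans_mx U W))) /\
  (forall U W, XY_basis B A U -> XY_basis B C W -> compatible U W ->
     parity_pattern (trans_mx U W) /\ parity_pattern (invmx (trans_mx U W))).
Proof.
move=> hbip; have hbip2 := bip_rot hbip; have hbip3 := bip_rot hbip2.
have [hd h1] := clause_full hbip.
have [_ h2] := clause_full hbip2.
have [_ h3] := clause_full hbip3.
by split; [|split; [|split]].
Qed.
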